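(* Let $A,B\in\mathrm{End}(\mathbb{R}^2)$ and consider the function $$F_{A,B}=\psi_B-\Big(\frac{\partial\psi_A}{\partial\theta}\Big)^2+\Big(\frac{\partial\psi_A}{\partial\phi}\Big)^2$$ on $\mathbb{T}$. (1) If $A\neq0$ is non-special, then for all $B$, $F_{A,B}$ is non-vanishing over an open dense subset of $Z_A$. (2) If $A\neq0$ is special and $B\neq0$ is not colinear with $A$, then $F_{A,B}$ is non-vanishing over an open dense subset of $Z_A$.
   Context: $\mathbb{T}=\mathbb{S}^1\times\mathbb{S}^1$ with coordinates $(\theta,\phi)$. For $A\in\mathrm{End}(\mathbb{R}^2)$, $\psi_A(\theta,\phi)=(\cos\theta,\sin\theta)A(\cos\phi,\sin\phi)^t$ and $Z_A=\psi_A^{-1}(\{0\})\subset\mathbb{T}$. A non-zero matrix $A$ is called special if it is a non-zero scalar multiple of an orthogonal matrix, and non-special otherwise. *)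

(* Defs.v *)
From Stdlib Require Import Reals.
From Coquelicot Require Import Coquelicot.
Open Scope R_scope.

Record Mat2 := mkMat2 { m11 : R; m12 : R; m21 : R; m22 : R }.

Definition mat0 : Mat2 := mkMat2 0 0 0 0.

Definition scale (c : R) (A : Mat2) : Mat2 :=
  mkMat2 (c * m11 A) (c * m12 A) (c * m21 A) (c * m22 A).

Definition orthogonal (O : Mat2) : Prop :=
  m11 O * m11 O + m21 O * m21 O = 1 /\
  m12 O * m12 O + m22 O * m22 O = 1 /\
  m11 O * m12 O + m21 O * m22 O = 0.

Definition special (A : Mat2) : Prop :=
  A <> mat0 /\ exists c O, c <> 0 /\ orthogonal O /\ A = scale c O.

Definition colinear (A B : Mat2) : Prop :=
  (exists c, B = scale c A) \/ (exists c, A = scale c B).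

(* psi_A(theta,phi) = (cos theta, sin theta) A (cos phi, sin phi)^t,
   with the torus coordinates (theta, phi) taken in R x R (2pi-periodic). *)
Definition psi (A : Mat2) (theta phi : R) : R :=
  cos theta * (m11 A * cos phi + m12 A * sin phi)
  + sin theta * (m21 A * cos phi + m22 A * sin phi).

Definition ZA (A : Mat2) (p : R * R) : Prop := psi A (fst p) (snd p) = 0.

Definition F (A B : Mat2) (theta phi : R) : R :=
  psi B theta phi
  - (Derive (fun t => psi A t phi) theta) ^ 2
  + (Derive (fun s => psi A theta s) phi) ^ 2.

Definition near (eps : R) (p q : R * R) : Prop :=
  Rabs (fst p - fst q) < eps /\ Rabs (snd p - snd q) < eps.

Definition rel_open (S U : R * R -> Prop) : Prop :=
  (forall p, U p -> S p) /\
  forall p, U p -> exists eps, eps > 0 /\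
    forall q, S q -> near eps p q -> U q.

Definition rel_dense (S U : R * R -> Prop) : Prop :=
  forall p, S p -> forall eps, eps > 0 -> exists q, U q /\ near eps p q.

Definition nonvanishing_open_dense (f : R -> R -> R) (S : R * R -> Prop) : Prop :=
  exists U, rel_open S U /\ rel_dense S U /\
    forall p, U p -> f (fst p) (snd p) <> 0.

(* Main.v *)
Require Import Defs.
From Stdlib Require Import Reals Lra Lia Psatz Classical.
From Coquelicot Require Import Coquelicot.
Open Scope R_scope.


Definition dth (A : Mat2) (th ph : R) : R :=
  - sin th * (m11 A * cos ph + m12 A * sin ph)
  + cos th * (m21 A * cos ph + m22 A * sin ph).
Definition dph (A : Mat2) (th ph : R) : R :=
  cos th * (- m11 A * sin ph + m12 A * cos ph)
  + sin th * (- m21 A * sin ph + m22 A * cos ph).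
Definition Fe (A B : Mat2) (th ph : R) : R :=
  psi B th ph - dth A th ph * dth A th ph + dph A th ph * dph A th ph.

Lemma F_eq A B th ph : F A B th ph = Fe A B th ph.
Proof.
  unfold F, Fe.
  replace (Derive (fun t => psi A t ph) th) with (dth A th ph).
  replace (Derive (fun s => psi A th s) ph) with (dph A th ph).
  ring.
  - symmetry; apply is_derive_unique; unfold psi, dph; auto_derive; auto; ring.
  - symmetry; apply is_derive_unique; unfold psi, dth; auto_derive; auto; ring.
Qed.

Ltac cont2 :=
  repeat first
   [ apply continuity_2d_pt_plus
   | apply continuity_2d_pt_minus
   | apply continuity_2d_pt_mult
   | apply continuity_2d_pt_opp
   | apply continuity_2d_pt_const
   | apply (continuity_1d_2d_pt_comp cos (fun u _ => u)); [apply continuity_cos | apply continuity_2d_pt_id1]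
   | apply (continuity_1d_2d_pt_comp sin (fun u _ => u)); [apply continuity_sin | apply continuity_2d_pt_id1]
   | apply (continuity_1d_2d_pt_comp cos (fun _ v => v)); [apply continuity_cos | apply continuity_2d_pt_id2]
   | apply (continuity_1d_2d_pt_comp sin (fun _ v => v)); [apply continuity_sin | apply continuity_2d_pt_id2] ].

Lemma Fe_cont A B x y : continuity_2d_pt (Fe A B) x y.
Proof.
  unfold Fe, psi, dth, dph. cont2.
Qed.

Definition Uset A B := fun p : R * R => ZA A p /\ F A B (fst p) (snd p) <> 0.

Lemma open_U A B : rel_open (ZA A) (Uset A B).
Proof.
  split. { intros p [H _]; exact H. }
  intros [x y] [HZ HF]. simpl in HF. rewrite F_eq in HF.
  assert (Hp : 0 < Rabs (Fe A B x y)) by (apply Rabs_pos_lt; auto).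
  destruct (Fe_cont A B x y (mkposreal _ Hp)) as [d Hd].
  exists d; split; [apply cond_pos|].
  intros [u v] HZq [H1 H2]; simpl in *. split; auto.
  rewrite F_eq. intro E. simpl in E.
  rewrite Rabs_minus_sym in H1, H2.
  specialize (Hd u v H1 H2). rewrite E in Hd. simpl in Hd.
  rewrite Rminus_0_l, Rabs_Ropp in Hd. lra.
Qed.

Definition rot (A : Mat2) (c s C S : R) : Mat2 :=
  mkMat2 (c * (m11 A * C + m12 A * S) + s * (m21 A * C + m22 A * S))
         (c * (- m11 A * S + m12 A * C) + s * (- m21 A * S + m22 A * C))
         (- s * (m11 A * C + m12 A * S) + c * (m21 A * C + m22 A * S))
         (- s * (- m11 A * S + m12 A * C) + c * (- m21 A * S + m22 A * C)).

Lemma psi_rot A a b x y :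
  psi A (a + x) (b + y) = psi (rot A (cos a) (sin a) (cos b) (sin b)) x y.
Proof. unfold psi, rot; simpl. rewrite !cos_plus, !sin_plus. ring. Qed.

Lemma Fe_rot A B a b x y :
  Fe A B (a + x) (b + y) =
  Fe (rot A (cos a) (sin a) (cos b) (sin b)) (rot B (cos a) (sin a) (cos b) (sin b)) x y.
Proof. unfold Fe, psi, dth, dph, rot; simpl. rewrite !cos_plus, !sin_plus. ring. Qed.

Lemma rot_rot A c s C S : c*c+s*s = 1 -> C*C+S*S = 1 ->
  rot (rot A c s C S) c (-s) C (-S) = A.
Proof.
  intros h1 h2. destruct A as [p q r w]; unfold rot; simpl.
  f_equal.
  - transitivity (p*(c*c+s*s)*(C*C+S*S)); [ring| rewrite h1, h2; ring].
  - transitivity (q*(c*c+s*s)*(C*C+S*S)); [ring| rewrite h1, h2; ring].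
  - transitivity (r*(c*c+s*s)*(C*C+S*S)); [ring| rewrite h1, h2; ring].
  - transitivity (w*(c*c+s*s)*(C*C+S*S)); [ring| rewrite h1, h2; ring].
Qed.

Lemma rot_scale A k c s C S : rot (scale k A) c s C S = scale k (rot A c s C S).
Proof. destruct A; unfold rot, scale; simpl; f_equal; ring. Qed.

Lemma rot_0 c s C S : rot mat0 c s C S = mat0.
Proof. unfold rot, mat0; simpl; f_equal; ring. Qed.

Definition det (A : Mat2) := m11 A * m22 A - m12 A * m21 A.
Definition spd (A : Mat2) :=
  let al := m11 A * m11 A + m12 A * m12 A in
  let ga := m21 A * m21 A + m22 A * m22 A in
  let be := m11 A * m21 A + m12 A * m22 A in
  (al - ga) * (al - ga) + 4 * (be * be).

Lemma det_rot A c s C S : det (rot A c s C S) = det A * (c*c+s*s) * (C*C+S*S).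
Proof. destruct A; unfold det, rot; simpl; ring. Qed.

Lemma spd_rot A c s C S :
  spd (rot A c s C S) = spd A * ((c*c+s*s) * (C*C+S*S)) ^ 2.
Proof. destruct A; unfold spd, rot; simpl; ring. Qed.

Lemma orth_rows o11 o12 o21 o22 :
  o11*o11 + o21*o21 = 1 -> o12*o12 + o22*o22 = 1 -> o11*o12 + o21*o22 = 0 ->
  exists d, d*d = 1 /\ o12 = - d * o21 /\ o22 = d * o11.
Proof.
  intros h1 h2 h3. set (d := o11*o22 - o21*o12).
  assert (hd : d*d = 1).
  { assert (E: (o11*o12 + o21*o22)^2 + d^2 = (o11*o11 + o21*o21)*(o12*o12 + o22*o22))
      by (unfold d; ring).
    rewrite h1, h2, h3 in E. nra. }
  assert (E2 : (o12 + d*o21)^2 + (o22 - d*o11)^2 = 0).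
  { transitivity ((o12*o12+o22*o22) + d*d*(o11*o11+o21*o21) - 2*d*d).
    - unfold d; ring.
    - rewrite h1, h2; nra. }
  exists d; split; [exact hd|].
  assert (0 <= (o12 + d*o21)^2) by apply pow2_ge_0.
  assert (0 <= (o22 - d*o11)^2) by apply pow2_ge_0.
  split.
  - assert ((o12 + d*o21)^2 = 0) by lra. nra.
  - assert ((o22 - d*o11)^2 = 0) by lra. nra.
Qed.

Lemma special_spd A : special A -> spd A = 0 /\ det A <> 0.
Proof.
  intros [_ [c [O [hc [[h1 [h2 h3]] ->]]]]].
  destruct O as [o11 o12 o21 o22]; simpl in *.
  destruct (orth_rows _ _ _ _ h1 h2 h3) as [d [hd [e1 e2]]].
  subst o12 o22. unfold spd, det, scale; simpl. split.
  - transitivity (c^4 * (o11*o11-o21*o21)^2 * (1 - d*d)^2 + 4 * (c^4 * (o11*o21)^2 * (1 - d*d)^2)); [ring|].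
    rewrite hd; ring.
  - replace (c * o11 * (c * (d * o11)) - c * (- d * o21) * (c * o21)) with (c*c*d*(o11*o11+o21*o21)) by ring.
    rewrite h1. intro E. assert (d <> 0) by (intro; subst; lra).
    apply Rmult_integral in E; destruct E as [E|E]; [|lra].
    apply Rmult_integral in E; destruct E as [E|E]; [|auto].
    apply Rmult_integral in E; destruct E; auto.
Qed.

Lemma mat_ext (A B : Mat2) : m11 A = m11 B -> m12 A = m12 B -> m21 A = m21 B -> m22 A = m22 B -> A = B.
Proof. destruct A, B; simpl; intros; subst; auto. Qed.

Lemma spd_special A : A <> mat0 -> spd A = 0 -> special A.
Proof.
  intros hA hs. split; auto.
  destruct A as [a11 a12 a21 a22]. unfold spd in hs; simpl in hs.
  set (al := a11*a11+a12*a12) in *. set (ga := a21*a21+a22*a22) in *.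
  set (be := a11*a21+a12*a22) in *.
  assert (hag : al = ga) by nra. assert (hb : be = 0) by nra.
  assert (hal : 0 < al).
  { assert (0 <= a11*a11) by nra. assert (0 <= a12*a12) by nra.
    assert (0 <= a21*a21) by nra. assert (0 <= a22*a22) by nra.
    destruct (Req_dec al 0) as [E|E]; [|unfold al in *; lra].
    exfalso; apply hA. unfold mat0.
    assert (a11 = 0) by (unfold al in *; nra). assert (a12 = 0) by (unfold al in *; nra).
    assert (a21 = 0) by (unfold ga, al in *; nra). assert (a22 = 0) by (unfold ga, al in *; nra).
    subst; auto. }
  set (c := sqrt al).
  assert (hc : 0 < c) by (apply sqrt_lt_R0; auto).
  assert (hcc : c * c = al) by (apply sqrt_sqrt; lra).
  destruct (orth_rows (a11/c) (a21/c) (a12/c) (a22/c)) as [d [hd [e1 e2]]].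
  { replace (a11 / c * (a11 / c) + a12 / c * (a12 / c)) with (al / (c*c)) by (unfold al; field; lra).
    rewrite hcc; field; lra. }
  { replace (a21 / c * (a21 / c) + a22 / c * (a22 / c)) with (ga / (c*c)) by (unfold ga; field; lra).
    rewrite hcc, hag; field; lra. }
  { replace (a11 / c * (a21 / c) + a12 / c * (a22 / c)) with (be / (c*c)) by (unfold be; field; lra).
    rewrite hb; field; lra. }
  exists c, (mkMat2 (a11/c) (a12/c) (a21/c) (a22/c)).
  split; [lra|]. split.
  - unfold orthogonal; simpl.
    assert (E1 : a21 = -d * a12) by (apply (Rmult_eq_reg_r (/c)); [rewrite Rmult_assoc; exact e1| apply Rinv_neq_0_compat; lra]).
    assert (E2 : a22 = d * a11) by (apply (Rmult_eq_reg_r (/c)); [rewrite Rmult_assoc; exact e2| apply Rinv_neq_0_compat; lra]).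
    subst a21 a22. split; [|split].
    + replace (a11 / c * (a11 / c) + - d * a12 / c * (- d * a12 / c)) with ((a11*a11 + d*d*(a12*a12))/(c*c)) by (field; lra).
      rewrite hd, hcc. assert (Hal: al = a11*a11+a12*a12) by reflexivity. rewrite Hal. field. rewrite <- Hal; lra.
    + replace (a12 / c * (a12 / c) + d * a11 / c * (d * a11 / c)) with ((a12*a12 + d*d*(a11*a11))/(c*c)) by (field; lra).
      rewrite hd, hcc. assert (Hal: al = a11*a11+a12*a12) by reflexivity. rewrite Hal. field. rewrite <- Hal; lra.
    + replace (a11 / c * (a12 / c) + - d * a12 / c * (d * a11 / c)) with (a11*a12*(1 - d*d)/(c*c)) by (field; lra). rewrite hd; field; lra.
  - unfold scale; simpl; f_equal; field; lra.
Qed.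

Lemma atan_facts t : 0 < cos (atan t) /\ sin (atan t) = t * cos (atan t) /\
  cos (atan t) * cos (atan t) * (1 + t*t) = 1.
Proof.
  rewrite sin_atan, cos_atan. unfold Rsqr.
  assert (h : 0 < 1 + t*t) by nra.
  assert (hs : 0 < sqrt (1 + t*t)) by (apply sqrt_lt_R0; auto).
  assert (hss : sqrt (1 + t*t) * sqrt (1 + t*t) = 1 + t*t) by (apply sqrt_sqrt; lra).
  split; [|split].
  - apply Rdiv_lt_0_compat; lra.
  - field; lra.
  - replace (1 / sqrt (1 + t*t) * (1 / sqrt (1 + t*t)) * (1 + t * t)) with ((1 + t*t) / (sqrt (1 + t*t) * sqrt (1 + t*t))) by (field; lra).
    rewrite hss; field; lra.
Qed.

Lemma atan_small eps : 0 < eps -> exists T, 0 < T /\ forall x, Rabs x < T -> Rabs (atan x) < eps.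
Proof.
  intros he. set (e1 := Rmin eps 1).
  assert (h1 : 0 < e1) by (unfold e1; apply Rmin_glb_lt; lra).
  assert (h2 : e1 <= eps) by apply Rmin_l.
  assert (h3 : e1 <= 1) by apply Rmin_r.
  assert (hpi : 1 < PI/2) by apply PI2_1.
  exists (tan e1). split. { apply tan_gt_0; lra. }
  intros x hx. assert (E : atan (tan e1) = e1) by (apply atan_tan; lra).
  apply Rabs_def2 in hx. destruct hx as [hx1 hx2].
  apply Rabs_def1.
  - apply atan_increasing in hx1. lra.
  - apply atan_increasing in hx2. rewrite atan_opp in hx2. lra.
Qed.

Lemma sq_derive c X Y m : 0 < c -> c * c * m = 1 -> c * X - c * c * Y = 0 -> X * X * m = Y * Y.
Proof.
  intros hc hm h.
  assert (hX : X = c * Y).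
  { apply (Rmult_eq_reg_l c); [|lra]. lra. }
  subst X. replace (c * Y * (c * Y) * m) with ((c*c*m) * (Y*Y)) by ring. rewrite hm; ring.
Qed.

Definition Kg a12 a21 a22 b11 b12 b21 b22 t :=
  let D := a12 + a22*t in let N := -(a21*t) in
  let BD := b11*D + b12*N + t*(b21*D + b22*N) in
  let DtD := -t*(a12*N) + (a21*D + a22*N) in
  let DpD := a12*D + t*(-a21*N + a22*D) in
  BD*BD*(1+t*t)*(D*D+N*N) - (DtD*DtD - DpD*DpD)^2.

Lemma curve_Z a12 a21 a22 t : a12 + a22*t <> 0 ->
  psi (mkMat2 0 a12 a21 a22) (atan t) (atan (-(a21*t)/(a12+a22*t))) = 0.
Proof.
  intros hD. set (r := -(a21*t)/(a12+a22*t)).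
  destruct (atan_facts t) as [_ [e1 _]]. destruct (atan_facts r) as [_ [e2 _]].
  unfold psi; simpl. rewrite e1, e2.
  replace (cos (atan t) * (0 * cos (atan r) + a12 * (r * cos (atan r))) +
    t * cos (atan t) * (a21 * cos (atan r) + a22 * (r * cos (atan r)))) with
    (cos (atan t) * cos (atan r) * (r * (a12 + a22*t) + a21 * t)) by ring.
  unfold r. field_simplify; [|auto]. lra.
Qed.

Lemma curve_F a12 a21 a22 b11 b12 b21 b22 t : a12 + a22*t <> 0 ->
  Fe (mkMat2 0 a12 a21 a22) (mkMat2 b11 b12 b21 b22) (atan t) (atan (-(a21*t)/(a12+a22*t))) = 0 ->
  Kg a12 a21 a22 b11 b12 b21 b22 t = 0.
Proof.
  intros hD HF. set (r := -(a21*t)/(a12+a22*t)) in HF.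
  destruct (atan_facts t) as [p1 [e1 m1]]. destruct (atan_facts r) as [p2 [e2 m2]].
  set (X := b11 + b12 * r + t * (b21 + b22 * r)).
  set (Y := (-t*(a12*r) + (a21 + a22*r))^2 - (a12 + t*(-a21*r + a22))^2).
  assert (H : X * X * ((1+t*t)*(1+r*r)) = Y * Y).
  { apply (sq_derive (cos (atan t) * cos (atan r))).
    - apply Rmult_lt_0_compat; auto.
    - transitivity ((cos (atan t) * cos (atan t) * (1 + t*t)) * (cos (atan r) * cos (atan r) * (1 + r*r))); [ring|].
      rewrite m1, m2; ring.
    - rewrite <- HF. unfold Fe, psi, dth, dph; simpl. rewrite e1, e2. unfold X, Y. ring. }
  transitivity ((a12 + a22*t)^4 * (X * X * ((1+t*t)*(1+r*r)) - Y * Y)).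
  - unfold Kg, X, Y, r. field. auto.
  - rewrite H; ring.
Qed.

Lemma line1_Z a21 a22 ph : psi (mkMat2 0 0 a21 a22) 0 ph = 0.
Proof. unfold psi; simpl. rewrite sin_0. ring. Qed.

Lemma line2_Z a12 a22 th : psi (mkMat2 0 a12 0 a22) th 0 = 0.
Proof. unfold psi; simpl. rewrite sin_0. ring. Qed.

Lemma line1_F a21 a22 b11 b12 b21 b22 r :
  Fe (mkMat2 0 0 a21 a22) (mkMat2 b11 b12 b21 b22) 0 (atan r) = 0 ->
  (b11 + b12*r)^2 * (1 + r^2) = (a21 + a22*r)^4.
Proof.
  intros HF. destruct (atan_facts r) as [p2 [e2 m2]].
  replace ((b11 + b12*r)^2 * (1 + r^2)) with ((b11 + b12*r) * (b11 + b12*r) * (1 + r*r)) by ring.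
  replace ((a21 + a22*r)^4) with ((a21 + a22*r)^2 * (a21 + a22*r)^2) by ring.
  apply (sq_derive (cos (atan r))); auto.
  rewrite <- HF. unfold Fe, psi, dth, dph; simpl. rewrite e2, sin_0, cos_0. ring.
Qed.

Lemma line2_F a12 a22 b11 b12 b21 b22 t :
  Fe (mkMat2 0 a12 0 a22) (mkMat2 b11 b12 b21 b22) (atan t) 0 = 0 ->
  (b11 + b21*t)^2 * (1 + t^2) = (a12 + a22*t)^4.
Proof.
  intros HF. destruct (atan_facts t) as [p2 [e2 m2]].
  replace ((b11 + b21*t)^2 * (1 + t^2)) with ((b11 + b21*t) * (b11 + b21*t) * (1 + t*t)) by ring.
  replace ((a12 + a22*t)^4) with ((-(a12 + a22*t)^2) * (-(a12 + a22*t)^2)) by ring.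
  apply (sq_derive (cos (atan t))); auto.
  rewrite <- HF. unfold Fe, psi, dth, dph; simpl. rewrite e2, sin_0, cos_0. ring.
Qed.

Definition poly2 (k0 k1 k2 t : R) := k0 * t^0 + k1 * t^1 + k2 * t^2.
Lemma vand3 k0 k1 k2 tau : tau <> 0 -> poly2 k0 k1 k2 (0 * tau) = 0 -> poly2 k0 k1 k2 (1 * tau) = 0 -> poly2 k0 k1 k2 (2 * tau) = 0 -> k0 = 0 /\ k1 = 0 /\ k2 = 0.
Proof.
  intros ht H0 H1 H2.
  assert (E0 : 1 * (k0 * tau^0) + 0 * (k1 * tau^1) + 0 * (k2 * tau^2) = 0) by (transitivity (poly2 k0 k1 k2 (0 * tau)); [unfold poly2; ring | exact H0]).
  assert (E1 : 1 * (k0 * tau^0) + 1 * (k1 * tau^1) + 1 * (k2 * tau^2) = 0) by (transitivity (poly2 k0 k1 k2 (1 * tau)); [unfold poly2; ring | exact H1]).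
  assert (E2 : 1 * (k0 * tau^0) + 2 * (k1 * tau^1) + 4 * (k2 * tau^2) = 0) by (transitivity (poly2 k0 k1 k2 (2 * tau)); [unfold poly2; ring | exact H2]).
  assert (G0 : k0 * tau^0 = 0) by lra.
  assert (G1 : k1 * tau^1 = 0) by lra.
  assert (G2 : k2 * tau^2 = 0) by lra.
  assert (Z0 : k0 = 0) by (apply Rmult_integral in G0; destruct G0 as [G|G]; [exact G| exfalso; apply (pow_nonzero tau 0 ht G)]).
  assert (Z1 : k1 = 0) by (apply Rmult_integral in G1; destruct G1 as [G|G]; [exact G| exfalso; apply (pow_nonzero tau 1 ht G)]).
  assert (Z2 : k2 = 0) by (apply Rmult_integral in G2; destruct G2 as [G|G]; [exact G| exfalso; apply (pow_nonzero tau 2 ht G)]).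
  tauto.
Qed.

Definition poly4 (k0 k1 k2 k3 k4 t : R) := k0 * t^0 + k1 * t^1 + k2 * t^2 + k3 * t^3 + k4 * t^4.
Lemma vand5 k0 k1 k2 k3 k4 tau : tau <> 0 -> poly4 k0 k1 k2 k3 k4 (0 * tau) = 0 -> poly4 k0 k1 k2 k3 k4 (1 * tau) = 0 -> poly4 k0 k1 k2 k3 k4 (2 * tau) = 0 -> poly4 k0 k1 k2 k3 k4 (3 * tau) = 0 -> poly4 k0 k1 k2 k3 k4 (4 * tau) = 0 -> k0 = 0 /\ k1 = 0 /\ k2 = 0 /\ k3 = 0 /\ k4 = 0.
Proof.
  intros ht H0 H1 H2 H3 H4.
  assert (E0 : 1 * (k0 * tau^0) + 0 * (k1 * tau^1) + 0 * (k2 * tau^2) + 0 * (k3 * tau^3) + 0 * (k4 * tau^4) = 0) by (transitivity (poly4 k0 k1 k2 k3 k4 (0 * tau)); [unfold poly4; ring | exact H0]).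
  assert (E1 : 1 * (k0 * tau^0) + 1 * (k1 * tau^1) + 1 * (k2 * tau^2) + 1 * (k3 * tau^3) + 1 * (k4 * tau^4) = 0) by (transitivity (poly4 k0 k1 k2 k3 k4 (1 * tau)); [unfold poly4; ring | exact H1]).
  assert (E2 : 1 * (k0 * tau^0) + 2 * (k1 * tau^1) + 4 * (k2 * tau^2) + 8 * (k3 * tau^3) + 16 * (k4 * tau^4) = 0) by (transitivity (poly4 k0 k1 k2 k3 k4 (2 * tau)); [unfold poly4; ring | exact H2]).
  assert (E3 : 1 * (k0 * tau^0) + 3 * (k1 * tau^1) + 9 * (k2 * tau^2) + 27 * (k3 * tau^3) + 81 * (k4 * tau^4) = 0) by (transitivity (poly4 k0 k1 k2 k3 k4 (3 * tau)); [unfold poly4; ring | exact H3]).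
  assert (E4 : 1 * (k0 * tau^0) + 4 * (k1 * tau^1) + 16 * (k2 * tau^2) + 64 * (k3 * tau^3) + 256 * (k4 * tau^4) = 0) by (transitivity (poly4 k0 k1 k2 k3 k4 (4 * tau)); [unfold poly4; ring | exact H4]).
  assert (G0 : k0 * tau^0 = 0) by lra.
  assert (G1 : k1 * tau^1 = 0) by lra.
  assert (G2 : k2 * tau^2 = 0) by lra.
  assert (G3 : k3 * tau^3 = 0) by lra.
  assert (G4 : k4 * tau^4 = 0) by lra.
  assert (Z0 : k0 = 0) by (apply Rmult_integral in G0; destruct G0 as [G|G]; [exact G| exfalso; apply (pow_nonzero tau 0 ht G)]).
  assert (Z1 : k1 = 0) by (apply Rmult_integral in G1; destruct G1 as [G|G]; [exact G| exfalso; apply (pow_nonzero tau 1 ht G)]).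
  assert (Z2 : k2 = 0) by (apply Rmult_integral in G2; destruct G2 as [G|G]; [exact G| exfalso; apply (pow_nonzero tau 2 ht G)]).
  assert (Z3 : k3 = 0) by (apply Rmult_integral in G3; destruct G3 as [G|G]; [exact G| exfalso; apply (pow_nonzero tau 3 ht G)]).
  assert (Z4 : k4 = 0) by (apply Rmult_integral in G4; destruct G4 as [G|G]; [exact G| exfalso; apply (pow_nonzero tau 4 ht G)]).
  tauto.
Qed.

Definition poly8 (k0 k1 k2 k3 k4 k5 k6 k7 k8 t : R) := k0 * t^0 + k1 * t^1 + k2 * t^2 + k3 * t^3 + k4 * t^4 + k5 * t^5 + k6 * t^6 + k7 * t^7 + k8 * t^8.
Lemma vand9 k0 k1 k2 k3 k4 k5 k6 k7 k8 tau : tau <> 0 -> poly8 k0 k1 k2 k3 k4 k5 k6 k7 k8 (0 * tau) = 0 -> poly8 k0 k1 k2 k3 k4 k5 k6 k7 k8 (1 * tau) = 0 -> poly8 k0 k1 k2 k3 k4 k5 k6 k7 k8 (2 * tau) = 0 -> poly8 k0 k1 k2 k3 k4 k5 k6 k7 k8 (3 * tau) = 0 -> poly8 k0 k1 k2 k3 k4 k5 k6 k7 k8 (4 * tau) = 0 -> poly8 k0 k1 k2 k3 k4 k5 k6 k7 k8 (5 * tau) = 0 -> poly8 k0 k1 k2 k3 k4 k5 k6 k7 k8 (6 * tau) = 0 -> poly8 k0 k1 k2 k3 k4 k5 k6 k7 k8 (7 * tau) = 0 -> poly8 k0 k1 k2 k3 k4 k5 k6 k7 k8 (8 * tau) = 0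 -> k0 = 0 /\ k1 = 0 /\ k2 = 0 /\ k3 = 0 /\ k4 = 0 /\ k5 = 0 /\ k6 = 0 /\ k7 = 0 /\ k8 = 0.
Proof.
  intros ht H0 H1 H2 H3 H4 H5 H6 H7 H8.
  assert (E0 : 1 * (k0 * tau^0) + 0 * (k1 * tau^1) + 0 * (k2 * tau^2) + 0 * (k3 * tau^3) + 0 * (k4 * tau^4) + 0 * (k5 * tau^5) + 0 * (k6 * tau^6) + 0 * (k7 * tau^7) + 0 * (k8 * tau^8) = 0) by (transitivity (poly8 k0 k1 k2 k3 k4 k5 k6 k7 k8 (0 * tau)); [unfold poly8; ring | exact H0]).
  assert (E1 : 1 * (k0 * tau^0) + 1 * (k1 * tau^1) + 1 * (k2 * tau^2) + 1 * (k3 * tau^3) + 1 * (k4 * tau^4) + 1 * (k5 * tau^5) + 1 * (k6 * tau^6) + 1 * (k7 * tau^7) + 1 * (k8 * tau^8) = 0) by (transitivity (poly8 k0 k1 k2 k3 k4 k5 k6 k7 k8 (1 * tau)); [unfold poly8; ring | exact H1]).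
  assert (E2 : 1 * (k0 * tau^0) + 2 * (k1 * tau^1) + 4 * (k2 * tau^2) + 8 * (k3 * tau^3) + 16 * (k4 * tau^4) + 32 * (k5 * tau^5) + 64 * (k6 * tau^6) + 128 * (k7 * tau^7) + 256 * (k8 * tau^8) = 0) by (transitivity (poly8 k0 k1 k2 k3 k4 k5 k6 k7 k8 (2 * tau)); [unfold poly8; ring | exact H2]).
  assert (E3 : 1 * (k0 * tau^0) + 3 * (k1 * tau^1) + 9 * (k2 * tau^2) + 27 * (k3 * tau^3) + 81 * (k4 * tau^4) + 243 * (k5 * tau^5) + 729 * (k6 * tau^6) + 2187 * (k7 * tau^7) + 6561 * (k8 * tau^8) = 0) by (transitivity (poly8 k0 k1 k2 k3 k4 k5 k6 k7 k8 (3 * tau)); [unfold poly8; ring | exact H3]).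
  assert (E4 : 1 * (k0 * tau^0) + 4 * (k1 * tau^1) + 16 * (k2 * tau^2) + 64 * (k3 * tau^3) + 256 * (k4 * tau^4) + 1024 * (k5 * tau^5) + 4096 * (k6 * tau^6) + 16384 * (k7 * tau^7) + 65536 * (k8 * tau^8) = 0) by (transitivity (poly8 k0 k1 k2 k3 k4 k5 k6 k7 k8 (4 * tau)); [unfold poly8; ring | exact H4]).
  assert (E5 : 1 * (k0 * tau^0) + 5 * (k1 * tau^1) + 25 * (k2 * tau^2) + 125 * (k3 * tau^3) + 625 * (k4 * tau^4) + 3125 * (k5 * tau^5) + 15625 * (k6 * tau^6) + 78125 * (k7 * tau^7) + 390625 * (k8 * tau^8) = 0) by (transitivity (poly8 k0 k1 k2 k3 k4 k5 k6 k7 k8 (5 * tau)); [unfold poly8; ring | exact H5]).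
  assert (E6 : 1 * (k0 * tau^0) + 6 * (k1 * tau^1) + 36 * (k2 * tau^2) + 216 * (k3 * tau^3) + 1296 * (k4 * tau^4) + 7776 * (k5 * tau^5) + 46656 * (k6 * tau^6) + 279936 * (k7 * tau^7) + 1679616 * (k8 * tau^8) = 0) by (transitivity (poly8 k0 k1 k2 k3 k4 k5 k6 k7 k8 (6 * tau)); [unfold poly8; ring | exact H6]).
  assert (E7 : 1 * (k0 * tau^0) + 7 * (k1 * tau^1) + 49 * (k2 * tau^2) + 343 * (k3 * tau^3) + 2401 * (k4 * tau^4) + 16807 * (k5 * tau^5) + 117649 * (k6 * tau^6) + 823543 * (k7 * tau^7) + 5764801 * (k8 * tau^8) = 0) by (transitivity (poly8 k0 k1 k2 k3 k4 k5 k6 k7 k8 (7 * tau)); [unfold poly8; ring | exact H7]).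
  assert (E8 : 1 * (k0 * tau^0) + 8 * (k1 * tau^1) + 64 * (k2 * tau^2) + 512 * (k3 * tau^3) + 4096 * (k4 * tau^4) + 32768 * (k5 * tau^5) + 262144 * (k6 * tau^6) + 2097152 * (k7 * tau^7) + 16777216 * (k8 * tau^8) = 0) by (transitivity (poly8 k0 k1 k2 k3 k4 k5 k6 k7 k8 (8 * tau)); [unfold poly8; ring | exact H8]).
  assert (G0 : k0 * tau^0 = 0) by lra.
  assert (G1 : k1 * tau^1 = 0) by lra.
  assert (G2 : k2 * tau^2 = 0) by lra.
  assert (G3 : k3 * tau^3 = 0) by lra.
  assert (G4 : k4 * tau^4 = 0) by lra.
  assert (G5 : k5 * tau^5 = 0) by lra.
  assert (G6 : k6 * tau^6 = 0) by lra.
  assert (G7 : k7 * tau^7 = 0) by lra.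
  assert (G8 : k8 * tau^8 = 0) by lra.
  assert (Z0 : k0 = 0) by (apply Rmult_integral in G0; destruct G0 as [G|G]; [exact G| exfalso; apply (pow_nonzero tau 0 ht G)]).
  assert (Z1 : k1 = 0) by (apply Rmult_integral in G1; destruct G1 as [G|G]; [exact G| exfalso; apply (pow_nonzero tau 1 ht G)]).
  assert (Z2 : k2 = 0) by (apply Rmult_integral in G2; destruct G2 as [G|G]; [exact G| exfalso; apply (pow_nonzero tau 2 ht G)]).
  assert (Z3 : k3 = 0) by (apply Rmult_integral in G3; destruct G3 as [G|G]; [exact G| exfalso; apply (pow_nonzero tau 3 ht G)]).
  assert (Z4 : k4 = 0) by (apply Rmult_integral in G4; destruct G4 as [G|G]; [exact G| exfalso; apply (pow_nonzero tau 4 ht G)]).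
  assert (Z5 : k5 = 0) by (apply Rmult_integral in G5; destruct G5 as [G|G]; [exact G| exfalso; apply (pow_nonzero tau 5 ht G)]).
  assert (Z6 : k6 = 0) by (apply Rmult_integral in G6; destruct G6 as [G|G]; [exact G| exfalso; apply (pow_nonzero tau 6 ht G)]).
  assert (Z7 : k7 = 0) by (apply Rmult_integral in G7; destruct G7 as [G|G]; [exact G| exfalso; apply (pow_nonzero tau 7 ht G)]).
  assert (Z8 : k8 = 0) by (apply Rmult_integral in G8; destruct G8 as [G|G]; [exact G| exfalso; apply (pow_nonzero tau 8 ht G)]).
  tauto.
Qed.

Lemma Kg_expand a12 a21 a22 b11 b12 b21 b22 t : Kg a12 a21 a22 b11 b12 b21 b22 t = poly8 (-a12^4*a21^4 + a12^4*b11^2 + (2)*a12^6*a21^2 + -a12^8) ((-2)*a12^3*a21*b11*b12 + (4)*a12^3*a22*b11^2 + (2)*a12^4*b11*b21 + (8)*a12^5*a21^2*a22 + (-8)*a12^7*a22) ((-6)*a12^2*a21*a22*b11*b12 + a12^2*a21^2*b11^2 + a12^2*a21^2*b12^2 + (6)*a12^2*a22^2*b11^2 + (-2)*a12^3*a21*b11*b22 + (-2)*a12^3*a21*b12*b21 + (8)*a12^3*a22*b11*b21 + (12)*a12^4*a21^2*a22^2 + a12^4*b11^2 + a12^4*b21^2 + (-28)*a12^6*a22^2) ((-6)*a12*a21*a22^2*b11*b12 + (2)*a12*a21^2*a22*b11^2 + (2)*a12*a21^2*a22*b12^2 + (-2)*a12*a21^3*b11*b12 + (4)*a12*a22^3*b11^2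 + (-6)*a12^2*a21*a22*b11*b22 + (-6)*a12^2*a21*a22*b12*b21 + (2)*a12^2*a21^2*b11*b21 + (2)*a12^2*a21^2*b12*b22 + (12)*a12^2*a22^2*b11*b21 + (-2)*a12^3*a21*b11*b12 + (-2)*a12^3*a21*b21*b22 + (8)*a12^3*a21^2*a22^3 + (8)*a12^3*a21^4*a22 + (4)*a12^3*a22*b11^2 + (4)*a12^3*a22*b21^2 + (2)*a12^4*b11*b21 + (-8)*a12^5*a21^2*a22 + (-56)*a12^5*a22^3) ((-6)*a12*a21*a22^2*b11*b22 + (-6)*a12*a21*a22^2*b12*b21 + (4)*a12*a21^2*a22*b11*b21 + (4)*a12*a21^2*a22*b12*b22 + (-2)*a12*a21^3*b11*b22 + (-2)*a12*a21^3*b12*b21 + (8)*a12*a22^3*b11*b21 + (-6)*a12^2*a21*a22*b11*b12 + (-6)*a12^2*a21*a22*b21*b22 + (2)*a12^2*a21^2*a22^4 + a12^2*a21^2*b11^2 + a12^2*a21^2*b12^2 + a12^2*a21^2*b21^2 + a12^2*a21^2*b22^2 + (4)*a12^2*a21^4*a22^2 + (2)*a12^2*a21^6 + (6)*a12^2*a22^2*b11^2 + (6)*a12^2*a22^2*b21^2 + (-2)*a12^3*a21*b11*b22 + (-2)*a12^3*a21*b12*b21 + (8)*a12^3*a22*b11*b21 + (-36)*a12^4*a21^2*a22^2 + (-4)*a12^4*a21^4 + (-70)*a12^4*a22^4 + a12^4*b21^2 + (2)*a12^6*a21^2 + (-2)*a21*a22^3*b11*b12 + a21^2*a22^2*b11^2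 + a21^2*a22^2*b12^2 + (-2)*a21^3*a22*b11*b12 + a21^4*b12^2 + a22^4*b11^2) ((-6)*a12*a21*a22^2*b11*b12 + (-6)*a12*a21*a22^2*b21*b22 + (2)*a12*a21^2*a22*b11^2 + (2)*a12*a21^2*a22*b12^2 + (2)*a12*a21^2*a22*b21^2 + (2)*a12*a21^2*a22*b22^2 + (-2)*a12*a21^3*b11*b12 + (-2)*a12*a21^3*b21*b22 + (4)*a12*a22^3*b11^2 + (4)*a12*a22^3*b21^2 + (-6)*a12^2*a21*a22*b11*b22 + (-6)*a12^2*a21*a22*b12*b21 + (2)*a12^2*a21^2*b11*b21 + (2)*a12^2*a21^2*b12*b22 + (12)*a12^2*a22^2*b11*b21 + (-2)*a12^3*a21*b21*b22 + (-64)*a12^3*a21^2*a22^3 + (-8)*a12^3*a21^4*a22 + (4)*a12^3*a22*b21^2 + (-56)*a12^3*a22^5 + (8)*a12^5*a21^2*a22 + (-2)*a21*a22^3*b11*b22 + (-2)*a21*a22^3*b12*b21 + (2)*a21^2*a22^2*b11*b21 + (2)*a21^2*a22^2*b12*b22 + (-2)*a21^3*a22*b11*b22 + (-2)*a21^3*a22*b12*b21 + (2)*a21^4*b12*b22 + (2)*a22^4*b11*b21) ((-6)*a12*a21*a22^2*b11*b22 + (-6)*a12*a21*a22^2*b12*b21 + (4)*a12*a21^2*a22*b11*b21 + (4)*a12*a21^2*a22*b12*b22 + (-2)*a12*a21^3*b11*b22 + (-2)*a12*a21^3*b12*b21 + (8)*a12*a22^3*b11*b21 + (-6)*a12^2*a21*a22*b21*b22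 + (-56)*a12^2*a21^2*a22^4 + a12^2*a21^2*b21^2 + a12^2*a21^2*b22^2 + (-28)*a12^2*a21^4*a22^2 + (6)*a12^2*a22^2*b21^2 + (-28)*a12^2*a22^6 + (12)*a12^4*a21^2*a22^2 + (-2)*a21*a22^3*b11*b12 + (-2)*a21*a22^3*b21*b22 + a21^2*a22^2*b11^2 + a21^2*a22^2*b12^2 + a21^2*a22^2*b21^2 + a21^2*a22^2*b22^2 + (-2)*a21^3*a22*b11*b12 + (-2)*a21^3*a22*b21*b22 + a21^4*b12^2 + a21^4*b22^2 + a22^4*b11^2 + a22^4*b21^2) ((-6)*a12*a21*a22^2*b21*b22 + (2)*a12*a21^2*a22*b21^2 + (2)*a12*a21^2*a22*b22^2 + (-24)*a12*a21^2*a22^5 + (-2)*a12*a21^3*b21*b22 + (-24)*a12*a21^4*a22^3 + (-8)*a12*a21^6*a22 + (4)*a12*a22^3*b21^2 + (-8)*a12*a22^7 + (8)*a12^3*a21^2*a22^3 + (8)*a12^3*a21^4*a22 + (-2)*a21*a22^3*b11*b22 + (-2)*a21*a22^3*b12*b21 + (2)*a21^2*a22^2*b11*b21 + (2)*a21^2*a22^2*b12*b22 + (-2)*a21^3*a22*b11*b22 + (-2)*a21^3*a22*b12*b21 + (2)*a21^4*b12*b22 + (2)*a22^4*b11*b21) ((2)*a12^2*a21^2*a22^4 + (4)*a12^2*a21^4*a22^2 + (2)*a12^2*a21^6 + -a12^4*a21^4 + (-2)*a21*a22^3*b21*b22 + a21^2*a22^2*b21^2 + a21^2*a22^2*b22^2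 + (-4)*a21^2*a22^6 + (-2)*a21^3*a22*b21*b22 + (-6)*a21^4*a22^4 + a21^4*b22^2 + (-4)*a21^6*a22^2 + -a21^8 + a22^4*b21^2 + -a22^8) t.

Proof. unfold Kg, poly8. ring. Qed.

Lemma Kg_zero a12 a21 a22 b11 b12 b21 b22 tau : tau <> 0 -> Kg a12 a21 a22 b11 b12 b21 b22 (0 * tau) = 0 -> Kg a12 a21 a22 b11 b12 b21 b22 (1 * tau) = 0 -> Kg a12 a21 a22 b11 b12 b21 b22 (2 * tau) = 0 -> Kg a12 a21 a22 b11 b12 b21 b22 (3 * tau) = 0 -> Kg a12 a21 a22 b11 b12 b21 b22 (4 * tau) = 0 -> Kg a12 a21 a22 b11 b12 b21 b22 (5 * tau) = 0 -> Kg a12 a21 a22 b11 b12 b21 b22 (6 * tau) = 0 -> Kg a12 a21 a22 b11 b12 b21 b22 (7 * tau) = 0 -> Kg a12 a21 a22 b11 b12 b21 b22 (8 * tau) = 0 -> a12*a12-a21*a21-a22*a22 = 0 /\ a12*a22 = 0.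

Proof.

  intros ht H0 H1 H2 H3 H4 H5 H6 H7 H8.

  rewrite !Kg_expand in *.

  destruct (vand9 _ _ _ _ _ _ _ _ _ tau ht H0 H1 H2 H3 H4 H5 H6 H7 H8) as [Z0 [Z1 [Z2 [Z3 [Z4 [Z5 [Z6 [Z7 Z8]]]]]]]].

  set (e1 := a12*a12-a21*a21-a22*a22). set (e2 := 2*(a12*a22)).

  set (w1 := -(e1*e1-e2*e2)). set (w2 := -(2*e1*e2)).

  assert (R1 : w1*w1 - w2*w2 = 0).

  { transitivity (-((-a12^4*a21^4 + a12^4*b11^2 + (2)*a12^6*a21^2 + -a12^8) - ((-6)*a12^2*a21*a22*b11*b12 + a12^2*a21^2*b11^2 + a12^2*a21^2*b12^2 + (6)*a12^2*a22^2*b11^2 + (-2)*a12^3*a21*b11*b22 + (-2)*a12^3*a21*b12*b21 + (8)*a12^3*a22*b11*b21 + (12)*a12^4*a21^2*a22^2 + a12^4*b11^2 + a12^4*b21^2 + (-28)*a12^6*a22^2) + ((-6)*a12*a21*a22^2*b11*b22 + (-6)*a12*a21*a22^2*b12*b21 + (4)*a12*a21^2*a22*b11*b21 + (4)*a12*a21^2*a22*b12*b22 + (-2)*a12*a21^3*b11*b22 + (-2)*a12*a21^3*b12*b21 + (8)*a12*a22^3*b11*b21 + (-6)*a12^2*a21*a22*b11*b12 + (-6)*a12^2*a21*a22*b21*b22 + (2)*a12^2*a21^2*a22^4 + a12^2*a21^2*b11^2 + a12^2*a21^2*b12^2 + a12^2*a21^2*b21^2 + a12^2*a21^2*b22^2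 + (4)*a12^2*a21^4*a22^2 + (2)*a12^2*a21^6 + (6)*a12^2*a22^2*b11^2 + (6)*a12^2*a22^2*b21^2 + (-2)*a12^3*a21*b11*b22 + (-2)*a12^3*a21*b12*b21 + (8)*a12^3*a22*b11*b21 + (-36)*a12^4*a21^2*a22^2 + (-4)*a12^4*a21^4 + (-70)*a12^4*a22^4 + a12^4*b21^2 + (2)*a12^6*a21^2 + (-2)*a21*a22^3*b11*b12 + a21^2*a22^2*b11^2 + a21^2*a22^2*b12^2 + (-2)*a21^3*a22*b11*b12 + a21^4*b12^2 + a22^4*b11^2) - ((-6)*a12*a21*a22^2*b11*b22 + (-6)*a12*a21*a22^2*b12*b21 + (4)*a12*a21^2*a22*b11*b21 + (4)*a12*a21^2*a22*b12*b22 + (-2)*a12*a21^3*b11*b22 + (-2)*a12*a21^3*b12*b21 + (8)*a12*a22^3*b11*b21 + (-6)*a12^2*a21*a22*b21*b22 + (-56)*a12^2*a21^2*a22^4 + a12^2*a21^2*b21^2 + a12^2*a21^2*b22^2 + (-28)*a12^2*a21^4*a22^2 + (6)*a12^2*a22^2*b21^2 + (-28)*a12^2*a22^6 + (12)*a12^4*a21^2*a22^2 + (-2)*a21*a22^3*b11*b12 + (-2)*a21*a22^3*b21*b22 + a21^2*a22^2*b11^2 + a21^2*a22^2*b12^2 + a21^2*a22^2*b21^2 + a21^2*a22^2*b22^2 + (-2)*a21^3*a22*b11*b12 + (-2)*a21^3*a22*b21*b22 + a21^4*b12^2 + a21^4*b22^2 + a22^4*b11^2 + a22^4*b21^2) +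 ((2)*a12^2*a21^2*a22^4 + (4)*a12^2*a21^4*a22^2 + (2)*a12^2*a21^6 + -a12^4*a21^4 + (-2)*a21*a22^3*b21*b22 + a21^2*a22^2*b21^2 + a21^2*a22^2*b22^2 + (-4)*a21^2*a22^6 + (-2)*a21^3*a22*b21*b22 + (-6)*a21^4*a22^4 + a21^4*b22^2 + (-4)*a21^6*a22^2 + -a21^8 + a22^4*b21^2 + -a22^8))); [unfold w1, w2, e1, e2; ring|]. rewrite Z0, Z2, Z4, Z6, Z8; ring. }

  assert (R2 : 2*w1*w2 = 0).

  { transitivity (-(((-2)*a12^3*a21*b11*b12 + (4)*a12^3*a22*b11^2 + (2)*a12^4*b11*b21 + (8)*a12^5*a21^2*a22 + (-8)*a12^7*a22) - ((-6)*a12*a21*a22^2*b11*b12 + (2)*a12*a21^2*a22*b11^2 + (2)*a12*a21^2*a22*b12^2 + (-2)*a12*a21^3*b11*b12 + (4)*a12*a22^3*b11^2 + (-6)*a12^2*a21*a22*b11*b22 + (-6)*a12^2*a21*a22*b12*b21 + (2)*a12^2*a21^2*b11*b21 + (2)*a12^2*a21^2*b12*b22 + (12)*a12^2*a22^2*b11*b21 + (-2)*a12^3*a21*b11*b12 + (-2)*a12^3*a21*b21*b22 + (8)*a12^3*a21^2*a22^3 + (8)*a12^3*a21^4*a22 + (4)*a12^3*a22*b11^2 + (4)*a12^3*a22*b21^2 + (2)*a12^4*b11*b21 + (-8)*a12^5*a21^2*a22 + (-56)*a12^5*a22^3) + ((-6)*a12*a21*a22^2*b11*b12 + (-6)*a12*a21*a22^2*b21*b22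 + (2)*a12*a21^2*a22*b11^2 + (2)*a12*a21^2*a22*b12^2 + (2)*a12*a21^2*a22*b21^2 + (2)*a12*a21^2*a22*b22^2 + (-2)*a12*a21^3*b11*b12 + (-2)*a12*a21^3*b21*b22 + (4)*a12*a22^3*b11^2 + (4)*a12*a22^3*b21^2 + (-6)*a12^2*a21*a22*b11*b22 + (-6)*a12^2*a21*a22*b12*b21 + (2)*a12^2*a21^2*b11*b21 + (2)*a12^2*a21^2*b12*b22 + (12)*a12^2*a22^2*b11*b21 + (-2)*a12^3*a21*b21*b22 + (-64)*a12^3*a21^2*a22^3 + (-8)*a12^3*a21^4*a22 + (4)*a12^3*a22*b21^2 + (-56)*a12^3*a22^5 + (8)*a12^5*a21^2*a22 + (-2)*a21*a22^3*b11*b22 + (-2)*a21*a22^3*b12*b21 + (2)*a21^2*a22^2*b11*b21 + (2)*a21^2*a22^2*b12*b22 + (-2)*a21^3*a22*b11*b22 + (-2)*a21^3*a22*b12*b21 + (2)*a21^4*b12*b22 + (2)*a22^4*b11*b21) - ((-6)*a12*a21*a22^2*b21*b22 + (2)*a12*a21^2*a22*b21^2 + (2)*a12*a21^2*a22*b22^2 + (-24)*a12*a21^2*a22^5 + (-2)*a12*a21^3*b21*b22 + (-24)*a12*a21^4*a22^3 + (-8)*a12*a21^6*a22 + (4)*a12*a22^3*b21^2 + (-8)*a12*a22^7 + (8)*a12^3*a21^2*a22^3 + (8)*a12^3*a21^4*a22 + (-2)*a21*a22^3*b11*b22 + (-2)*a21*a22^3*b12*b21 + (2)*a21^2*a22^2*b11*b21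 + (2)*a21^2*a22^2*b12*b22 + (-2)*a21^3*a22*b11*b22 + (-2)*a21^3*a22*b12*b21 + (2)*a21^4*b12*b22 + (2)*a22^4*b11*b21))); [unfold w1, w2, e1, e2; ring|]. rewrite Z1, Z3, Z5, Z7; ring. }

  assert (hs : (w1*w1 + w2*w2)*(w1*w1+w2*w2) = 0) by (transitivity ((w1*w1 - w2*w2)*(w1*w1 - w2*w2) + (2*w1*w2)*(2*w1*w2)); [ring| rewrite R1, R2; ring]).

  assert (hs2 : w1*w1 + w2*w2 = 0) by (apply Rmult_integral in hs; tauto).

  assert (hw1 : w1 = 0) by nra. assert (hw2 : w2 = 0) by nra.

  unfold w1, w2 in hw1, hw2. assert (R3 : e1*e1 - e2*e2 = 0) by lra. assert (R4 : 2*e1*e2 = 0) by lra.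

  assert (hs3 : (e1*e1 + e2*e2)*(e1*e1+e2*e2) = 0) by (transitivity ((e1*e1 - e2*e2)*(e1*e1 - e2*e2) + (2*e1*e2)*(2*e1*e2)); [ring| rewrite R3, R4; ring]).

  assert (hs4 : e1*e1 + e2*e2 = 0) by (apply Rmult_integral in hs3; tauto).

  assert (he1 : e1 = 0) by nra. assert (he2 : e2 = 0) by nra.

  split; [exact he1|]. unfold e2 in he2. lra.

Qed.

Lemma line_zero b0 b1 a0 a1 tau : tau <> 0 ->
  (forall j, j = 0 \/ j = 1 \/ j = 2 \/ j = 3 \/ j = 4 ->
     (b0 + b1*(j*tau))^2 * (1 + (j*tau)^2) = (a0 + a1*(j*tau))^4) ->
  a0 = 0 /\ a1 = 0.
Proof.
  intros ht H.
  assert (HP : forall j, j = 0 \/ j = 1 \/ j = 2 \/ j = 3 \/ j = 4 ->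
    poly4 (b0*b0 - a0^4) (2*b0*b1 - 4*a0^3*a1) (b0*b0 + b1*b1 - 6*a0^2*a1^2)
          (2*b0*b1 - 4*a0*a1^3) (b1*b1 - a1^4) (j*tau) = 0).
  { intros j hj. specialize (H j hj). unfold poly4.
    transitivity ((b0 + b1*(j*tau))^2 * (1 + (j*tau)^2) - (a0 + a1*(j*tau))^4); [ring|].
    rewrite H; ring. }
  destruct (vand5 _ _ _ _ _ tau ht (HP 0 ltac:(tauto)) (HP 1 ltac:(tauto)) (HP 2 ltac:(tauto))
     (HP 3 ltac:(tauto)) (HP 4 ltac:(tauto))) as [Z0 [Z1 [Z2 [Z3 Z4]]]].
  set (p := a0*a0 - a1*a1). set (q := 2*a0*a1).
  assert (R1 : p*p - q*q = 0).
  { transitivity (-((b0*b0 - a0^4) - (b0*b0 + b1*b1 - 6*a0^2*a1^2) + (b1*b1 - a1^4))); [unfold p, q; ring|].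
    rewrite Z0, Z2, Z4; ring. }
  assert (R2 : 2*p*q = 0).
  { transitivity (-((2*b0*b1 - 4*a0^3*a1) - (2*b0*b1 - 4*a0*a1^3))); [unfold p, q; ring|].
    rewrite Z1, Z3; ring. }
  assert (hs : (p*p + q*q)*(p*p+q*q) = 0) by (transitivity ((p*p - q*q)*(p*p - q*q) + (2*p*q)*(2*p*q)); [ring| rewrite R1, R2; ring]).
  assert (hs2 : p*p + q*q = 0) by (apply Rmult_integral in hs; tauto).
  assert (hp : p = 0) by nra. assert (hq : q = 0) by nra.
  unfold p, q in *. assert (a0 * a0 = 0 \/ a1 * a1 = 0) by (apply Rmult_integral; nra).
  nra.
Qed.

Lemma Kg_special a12 a21 b11 b12 b21 b22 t : (a21 = a12 \/ a21 = - a12) ->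
  Kg a12 a21 0 b11 b12 b21 b22 t =
  a12^2 * (1+t*t)^2 * (poly2 (b11*a12) (b21*a12 - b12*a21) (-(b22*a21)) t)^2.
Proof. intros [-> | ->]; unfold Kg, poly2; ring. Qed.

Lemma small_r a12 a21 a22 T : a12 <> 0 -> 0 < T -> exists d, 0 < d /\ forall t, Rabs t < d ->
  a12 + a22*t <> 0 /\ Rabs (-(a21*t)/(a12+a22*t)) < T.
Proof.
  intros h hT. set (p := Rabs a12). set (q := Rabs a22). set (w := Rabs a21).
  assert (hp : 0 < p) by (apply Rabs_pos_lt; auto).
  assert (hq : 0 <= q) by apply Rabs_pos. assert (hw : 0 <= w) by apply Rabs_pos.
  exists (Rmin (p/(2*(q+1))) (T*p/(2*(w+1)))). split.
  { apply Rmin_glb_lt; apply Rdiv_lt_0_compat; nra. }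
  intros t ht. set (u := Rabs t) in *.
  assert (hu : 0 <= u) by apply Rabs_pos.
  assert (h1 : u < p/(2*(q+1))) by (eapply Rlt_le_trans; [exact ht| apply Rmin_l]).
  assert (h2 : u < T*p/(2*(w+1))) by (eapply Rlt_le_trans; [exact ht| apply Rmin_r]).
  apply (Rmult_lt_compat_r (2*(q+1))) in h1; [|nra].
  apply (Rmult_lt_compat_r (2*(w+1))) in h2; [|nra].
  replace (p / (2 * (q + 1)) * (2 * (q + 1))) with p in h1 by (field; lra).
  replace (T * p / (2 * (w + 1)) * (2 * (w + 1))) with (T*p) in h2 by (field; lra).
  assert (hD : p/2 < Rabs (a12 + a22*t)).
  { assert (E := Rabs_triang_inv a12 (-(a22*t))).
    replace (a12 - - (a22 * t)) with (a12 + a22*t) in E by ring.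
    rewrite Rabs_Ropp, Rabs_mult in E. fold p q u in E. nra. }
  split.
  - intro E. rewrite E, Rabs_R0 in hD. lra.
  - assert (hD0 : a12 + a22 * t <> 0) by (intro E; rewrite E, Rabs_R0 in hD; lra).
    rewrite Rabs_div by auto. rewrite Rabs_Ropp, Rabs_mult. fold w u.
    apply (Rmult_lt_reg_r (Rabs (a12 + a22*t))); [lra|].
    unfold Rdiv. rewrite Rmult_assoc, Rinv_l by lra. nra.
Qed.

Lemma psi_a11 A x y : m11 A = 0 -> psi A x y = psi (mkMat2 0 (m12 A) (m21 A) (m22 A)) x y.
Proof. destruct A; simpl; intros ->; auto. Qed.

Lemma Fe_a11 A B x y : m11 A = 0 ->
  Fe A B x y = Fe (mkMat2 0 (m12 A) (m21 A) (m22 A)) (mkMat2 (m11 B) (m12 B) (m21 B) (m22 B)) x y.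
Proof. destruct A, B; simpl; intros ->; auto. Qed.

Lemma dense_U A B :
  (forall th ph eps, ZA A (th, ph) -> eps > 0 ->
     (forall q, ZA A q -> near eps (th, ph) q -> F A B (fst q) (snd q) = 0) -> False) ->
  rel_dense (ZA A) (Uset A B).
Proof.
  intros key [th ph] hZ eps he.
  destruct (classic (exists q, Uset A B q /\ near eps (th, ph) q)) as [E|E]; auto.
  exfalso. apply (key th ph eps hZ he). intros q hq hn.
  apply NNPP. intro hF. apply E. exists q. split; auto. split; auto.
Qed.

Definition allzero (A B : Mat2) (eps : R) :=
  forall x y, Rabs x < eps -> Rabs y < eps -> psi A x y = 0 -> Fe A B x y = 0.

Lemma nine_pts (P : R -> Prop) d : 0 < d -> (forall t, Rabs t < d -> P t) ->
  exists tau, tau <> 0 /\ P (0*tau) /\ P (1*tau) /\ P (2*tau) /\ P (3*tau) /\ P (4*tau) /\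
    P (5*tau) /\ P (6*tau) /\ P (7*tau) /\ P (8*tau).
Proof.
  intros hd H. exists (d/9). split; [lra|].
  repeat split; apply H; rewrite Rabs_right; lra.
Qed.

Lemma key_rank2 a12 a21 a22 b11 b12 b21 b22 eps : eps > 0 -> a12 <> 0 ->
  allzero (mkMat2 0 a12 a21 a22) (mkMat2 b11 b12 b21 b22) eps ->
  exists tau, tau <> 0 /\ forall j, (j = 0 \/ j = 1 \/ j = 2 \/ j = 3 \/ j = 4 \/ j = 5 \/ j = 6 \/ j = 7 \/ j = 8) ->
   Kg a12 a21 a22 b11 b12 b21 b22 (j*tau) = 0.
Proof.
  intros he ha H.
  destruct (atan_small eps he) as [T [hT hTs]].
  destruct (small_r a12 a21 a22 T ha hT) as [d [hd hds]].
  assert (HP : forall t, Rabs t < Rmin d T -> Kg a12 a21 a22 b11 b12 b21 b22 t = 0).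
  { intros t ht. assert (h1 : Rabs t < d) by (eapply Rlt_le_trans; [exact ht| apply Rmin_l]).
    assert (h2 : Rabs t < T) by (eapply Rlt_le_trans; [exact ht| apply Rmin_r]).
    destruct (hds t h1) as [hD hr].
    apply (curve_F a12 a21 a22 b11 b12 b21 b22 t hD). apply H.
    - apply hTs; auto.
    - apply hTs; auto.
    - apply curve_Z; auto. }
  assert (hm : 0 < Rmin d T) by (apply Rmin_glb_lt; auto).
  destruct (nine_pts _ _ hm HP) as [tau [ht [P0 [P1 [P2 [P3 [P4 [P5 [P6 [P7 P8]]]]]]]]]].
  exists tau; split; auto.
  intros j hj; repeat destruct hj as [-> | hj]; auto. subst; auto.
Qed.

Lemma key_line1 a21 a22 b11 b12 b21 b22 eps : eps > 0 ->
  allzero (mkMat2 0 0 a21 a22) (mkMat2 b11 b12 b21 b22) eps -> a21 = 0 /\ a22 = 0.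
Proof.
  intros he H.
  destruct (atan_small eps he) as [T [hT hTs]].
  assert (HP : forall r, Rabs r < T -> (b11 + b12*r)^2 * (1 + r^2) = (a21 + a22*r)^4).
  { intros r hr. apply (line1_F a21 a22 b11 b12 b21 b22 r). apply H.
    - rewrite Rabs_R0; lra.
    - apply hTs; auto.
    - apply line1_Z. }
  destruct (nine_pts _ _ hT HP) as [tau [ht [P0 [P1 [P2 [P3 [P4 _]]]]]]].
  apply (line_zero b11 b12 a21 a22 tau ht).
  intros j hj; repeat destruct hj as [-> | hj]; auto. subst; auto.
Qed.

Lemma key_line2 a12 a22 b11 b12 b21 b22 eps : eps > 0 ->
  allzero (mkMat2 0 a12 0 a22) (mkMat2 b11 b12 b21 b22) eps -> a12 = 0 /\ a22 = 0.
Proof.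
  intros he H.
  destruct (atan_small eps he) as [T [hT hTs]].
  assert (HP : forall t, Rabs t < T -> (b11 + b21*t)^2 * (1 + t^2) = (a12 + a22*t)^4).
  { intros t hr. apply (line2_F a12 a22 b11 b12 b21 b22 t). apply H.
    - apply hTs; auto.
    - rewrite Rabs_R0; lra.
    - apply line2_Z. }
  destruct (nine_pts _ _ hT HP) as [tau [ht [P0 [P1 [P2 [P3 [P4 _]]]]]]].
  apply (line_zero b11 b21 a12 a22 tau ht).
  intros j hj; repeat destruct hj as [-> | hj]; auto. subst; auto.
Qed.

Lemma cs1 x : cos x * cos x + sin x * sin x = 1.
Proof. pose proof (sin2_cos2 x) as H. unfold Rsqr in H. lra. Qed.

Lemma reduce A B th ph eps : ZA A (th, ph) -> eps > 0 ->
  (forall q, ZA A q -> near eps (th, ph) q -> F A B (fst q) (snd q) = 0) ->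
  let A' := rot A (cos th) (sin th) (cos ph) (sin ph) in
  let B' := rot B (cos th) (sin th) (cos ph) (sin ph) in
  m11 A' = 0 /\
  allzero (mkMat2 0 (m12 A') (m21 A') (m22 A')) (mkMat2 (m11 B') (m12 B') (m21 B') (m22 B')) eps.
Proof.
  intros hZ he H A' B'.
  assert (h11 : m11 A' = 0).
  { unfold ZA in hZ; simpl in hZ.
    rewrite <- (Rplus_0_r th), <- (Rplus_0_r ph), psi_rot in hZ.
    unfold psi in hZ. rewrite cos_0, sin_0 in hZ. fold A' in hZ. rewrite <- hZ. ring. }
  split; auto.
  intros x y hx hy hpsi.
  rewrite <- Fe_a11 by auto. unfold A', B'. rewrite <- Fe_rot, <- F_eq.
  apply (H (th + x, ph + y)).
  - unfold ZA; simpl. rewrite psi_rot. fold A'. rewrite psi_a11 by auto. auto.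
  - unfold near; simpl. split.
    + replace (th - (th + x)) with (- x) by ring; rewrite Rabs_Ropp; auto.
    + replace (ph - (ph + y)) with (- y) by ring; rewrite Rabs_Ropp; auto.
Qed.

Lemma back A c s C S : c*c+s*s = 1 -> C*C+S*S = 1 -> rot A c s C S = mat0 -> A = mat0.
Proof.
  intros h1 h2 E. rewrite <- (rot_rot A c s C S h1 h2), E. apply rot_0.
Qed.

Lemma main1 A B : A <> mat0 -> ~ special A -> nonvanishing_open_dense (F A B) (ZA A).
Proof.
  intros hA hs. exists (Uset A B). split; [apply open_U|]. split; [|intros p [_ h]; exact h].
  apply dense_U. intros th ph eps hZ he Hall.
  destruct (reduce A B th ph eps hZ he Hall) as [h11 hall].
  assert (u1 := cs1 th). assert (u2 := cs1 ph).
  set (c := cos th) in *. set (s := sin th) in *. set (C := cos ph) in *. set (S := sin ph) in *.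
  assert (hdet : det (rot A c s C S) = det A) by (rewrite det_rot, u1, u2; ring).
  assert (hspd : spd (rot A c s C S) = spd A) by (rewrite spd_rot, u1, u2; ring).
  change (det (rot A c s C S)) with (m11 (rot A c s C S) * m22 (rot A c s C S) - m12 (rot A c s C S) * m21 (rot A c s C S)) in hdet.
  rewrite h11 in hdet.
  destruct (Req_dec (det A) 0) as [hd|hd].
  - rewrite hd in hdet.
    assert (hz : m12 (rot A c s C S) = 0 \/ m21 (rot A c s C S) = 0).
    { apply Rmult_integral. lra. }
    destruct hz as [hz|hz]; rewrite hz in hall.
    + destruct (key_line1 _ _ _ _ _ _ eps he hall) as [z1 z2].
      apply hA. apply (back A c s C S u1 u2). apply mat_ext; simpl; auto.
      all: try (rewrite ?h11, ?hz, ?z1, ?z2; reflexivity).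
    + destruct (key_line2 _ _ _ _ _ _ eps he hall) as [z1 z2].
      apply hA. apply (back A c s C S u1 u2). apply mat_ext; simpl; auto.
      all: try (rewrite ?h11, ?hz, ?z1, ?z2; reflexivity).
  - assert (ha12 : m12 (rot A c s C S) <> 0).
    { intro E. rewrite E in hdet. apply hd. lra. }
    destruct (key_rank2 _ _ _ _ _ _ _ eps he ha12 hall) as [tau [ht Hk]].
    destruct (Kg_zero _ _ _ _ _ _ _ tau ht (Hk 0 ltac:(tauto)) (Hk 1 ltac:(tauto)) (Hk 2 ltac:(tauto))
       (Hk 3 ltac:(tauto)) (Hk 4 ltac:(tauto)) (Hk 5 ltac:(tauto)) (Hk 6 ltac:(tauto))
       (Hk 7 ltac:(tauto)) (Hk 8 ltac:(tauto))) as [e1 e2].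
    apply hs. apply spd_special; auto. rewrite <- hspd.
    unfold spd. rewrite h11.
    set (a12 := m12 (rot A c s C S)) in *. set (a21 := m21 (rot A c s C S)) in *.
    set (a22 := m22 (rot A c s C S)) in *.
    transitivity ((a12*a12 - a21*a21 - a22*a22)^2 + 4 * (a12*a22)^2); [ring|].
    rewrite e1, e2; ring.
Qed.

Lemma main2 A B : A <> mat0 -> special A -> ~ colinear A B -> nonvanishing_open_dense (F A B) (ZA A).
Proof.
  intros hA hs hc. exists (Uset A B). split; [apply open_U|]. split; [|intros p [_ h]; exact h].
  apply dense_U. intros th ph eps hZ he Hall.
  destruct (special_spd A hs) as [hsp hd].
  destruct (reduce A B th ph eps hZ he Hall) as [h11 hall].
  assert (u1 := cs1 th). assert (u2 := cs1 ph).
  set (c := cos th) in *. set (s := sin th) in *. set (C := cos ph) in *. set (S := sin ph) in *.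
  assert (hdet : det (rot A c s C S) = det A) by (rewrite det_rot, u1, u2; ring).
  assert (hspd : spd (rot A c s C S) = spd A) by (rewrite spd_rot, u1, u2; ring).
  change (det (rot A c s C S)) with (m11 (rot A c s C S) * m22 (rot A c s C S) - m12 (rot A c s C S) * m21 (rot A c s C S)) in hdet.
  rewrite h11 in hdet.
  assert (ha12 : m12 (rot A c s C S) <> 0).
  { intro E. rewrite E in hdet. apply hd. lra. }
  destruct (key_rank2 _ _ _ _ _ _ _ eps he ha12 hall) as [tau [ht Hk]].
  rewrite hsp in hspd. unfold spd in hspd. rewrite h11 in hspd.
  set (A' := rot A c s C S) in *. set (B' := rot B c s C S) in *.
  set (a12 := m12 A') in *. set (a21 := m21 A') in *. set (a22 := m22 A') in *.
  assert (hsum : (a12*a12 - a21*a21 - a22*a22)^2 + 4 * (a12*a22)^2 = 0) by (rewrite <- hspd; ring).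
  assert (he1 : a12*a12 - a21*a21 - a22*a22 = 0) by nra.
  assert (he2 : a12*a22 = 0) by nra.
  assert (h22 : a22 = 0).
  { apply Rmult_integral in he2. destruct he2; [contradiction|auto]. }
  assert (hsg : a21 = a12 \/ a21 = - a12).
  { assert ((a21 - a12) * (a21 + a12) = 0) by (rewrite h22 in he1; nra).
    apply Rmult_integral in H. destruct H; [left|right]; lra. }
  assert (ha21 : a21 <> 0) by (destruct hsg; lra).
  set (b11 := m11 B') in *. set (b12 := m12 B') in *. set (b21 := m21 B') in *. set (b22 := m22 B') in *.
  assert (HP : forall j, (j = 0 \/ j = 1 \/ j = 2 \/ j = 3 \/ j = 4 \/ j = 5 \/ j = 6 \/ j = 7 \/ j = 8) ->
      poly2 (b11*a12) (b21*a12 - b12*a21) (-(b22*a21)) (j*tau) = 0).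
  { intros j hj. specialize (Hk j hj). rewrite h22, Kg_special in Hk by auto.
    assert (0 < 1 + (j*tau)*(j*tau)) by nra.
    apply Rmult_integral in Hk. destruct Hk as [Hk|Hk].
    - apply Rmult_integral in Hk. destruct Hk as [Hk|Hk].
      + exfalso. apply ha12. apply (pow_eq_zero_iff a12 2); [lia| exact Hk] || nra.
      + nra.
    - nra. }
  destruct (vand3 _ _ _ tau ht (HP 0 ltac:(tauto)) (HP 1 ltac:(tauto)) (HP 2 ltac:(tauto))) as [z0 [z1 z2]].
  assert (hb11 : b11 = 0) by (apply Rmult_integral in z0; destruct z0; [auto|contradiction]).
  assert (hb22 : b22 = 0) by (assert (b22 * a21 = 0) by lra; apply Rmult_integral in H; destruct H; [auto|contradiction]).
  apply hc. left. exists (b12 / a12).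
  assert (hB' : B' = scale (b12/a12) A').
  { apply mat_ext; unfold scale; cbn [m11 m12 m21 m22]; fold b11 b12 b21 b22 a12 a21 a22.
    - rewrite hb11, h11; ring.
    - field; auto.
    - apply (Rmult_eq_reg_r a12); auto. field_simplify; auto. lra.
    - rewrite hb22, h22; ring. }
  rewrite <- (rot_rot B c s C S u1 u2). fold B'. rewrite hB', rot_scale.
  unfold A'. rewrite rot_rot; auto.
Qed.

Theorem lemma2p6 :
  (forall A B : Mat2, A <> mat0 -> ~ special A ->
     nonvanishing_open_dense (F A B) (ZA A)) /\
  (forall A B : Mat2, A <> mat0 -> special A -> B <> mat0 -> ~ colinear A B ->
     nonvanishing_open_dense (F A B) (ZA A)).
Proof.
  split.
  - intros A B hA hs. apply main1; auto.
  - intros A B hA hs _ hc. apply main2; auto.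
Qed.
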